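(* Let $r\geq 1$ and let $\phi$ be the Drinfeld module over $K$ of rank $r$ with $\phi_\theta=\theta-\theta\tau^r$. Then $\phi[\theta]=\mathbb{F}_{q^r}$ (viewed inside $\overline{K}_\infty$), the field $K_\infty(\Lambda_\phi)$ contains $\mathbb{F}_{q^r}$, and $[K_\infty(\Lambda_\phi):K_\infty]\geq r$. Consequently, over all ranks, neither the degree $[K_\infty(\Lambda_\phi):K_\infty]$ nor the degree of the constant field extension $[\overline{\mathbb{F}_q}\cap K_\infty(\Lambda_\phi):\mathbb{F}_q]$ is bounded.
   Context: Let $\mathbb{F}_q$ be the finite field with $q$ elements, $K=\mathbb{F}_q(\theta)$, $A=\mathbb{F}_q[\theta]$, $K_\infty=\mathbb{F}_q((1/\theta))$, and $\overline{K}_\infty$ an algebraic closure of $K_\infty$; $\overline{\mathbb{F}_q}$ denotes the algebraic closure of $\mathbb{F}_q$ in $\overline{K}_\infty$. Let $\tau$ be the $q$-power Frobenius and $K\{\tau\}$ the skew polynomial ring with $\tau c=c^q\tau$. A Drinfeld module over $K$ of rank $r$ is an $\mathbb{F}_q$-algebra homomorphism $\phi:A\to K\{\tau\}$ with $\phi_\theta=\theta+a_1\tau+\dots+a_r\tau^r$, $a_r\neq0$. Its exponential $\exp_\phi(x)=\sum_{i\ge0}\alpha_ix^{q^i}$, $\alpha_0=1$, is the unique $\mathbb{F}_q$-linear entire power series with $\exp_\phi(ax)=\phi_a(\exp_\phi(x))$ for $a\in A$; its kernel $\Lambda_\phi$ is the period lattice. For $a\in A$, $\phi[a]=\{x\in\overline{K}_\infty\mid\phi_a(x)=0\}$.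 $K_\infty(S)$ denotes the field generated over $K_\infty$ by $S$. *)

(* Defs.v *)
From HB Require Import structures.
From mathcomp Require Import all_boot all_order all_algebra.
From mathcomp Require Import reals.
Set Implicit Arguments. Unset Strict Implicit. Unset Printing Implicit Defensive.
Import Order.TTheory GRing.Theory Num.Theory.
Local Open Scope ring_scope.

Section Defs.
Variables (R : realType) (F : finFieldType) (L : fieldType).

Definition is_subfield (P : L -> Prop) : Prop :=
  [/\ P 0, P 1, (forall x y, P x -> P y -> P (x - y)),
      (forall x y, P x -> P y -> P (x * y)) &
      (forall x, P x -> x != 0 -> P x^-1)].

Definition field_gen (S : L -> Prop) : L -> Prop :=
  fun x => forall P, is_subfield P -> (forall y, S y -> P y) -> P x.

Definition nonarch_abs (abs : L -> R) : Prop :=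
  [/\ (forall x, 0 <= abs x), (forall x, abs x = 0 <-> x = 0),
      (forall x y, abs (x * y) = abs x * abs y) &
      (forall x y, abs (x + y) <= Num.max (abs x) (abs y))].

Definition seq_cvg (abs : L -> R) (u : nat -> L) (l : L) : Prop :=
  forall e : R, 0 < e -> exists N, forall n, (N <= n)%N -> abs (u n - l) < e.

Definition seq_cauchy (abs : L -> R) (u : nat -> L) : Prop :=
  forall e : R, 0 < e -> exists N, forall m n, (N <= m)%N -> (N <= n)%N ->
    abs (u m - u n) < e.

(* Kinf is (a copy of) K_infty = F_q((1/theta)) inside L: the completion of
   F_q(theta) for an absolute value trivial on F_q with |theta| > 1 *)
Definition is_Kinfty (iota : {rmorphism F -> L}) (abs : L -> R) (theta : L)
    (Kinf : L -> Prop) : Prop :=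
  [/\ is_subfield Kinf, Kinf theta, (forall c, Kinf (iota c)),
      1 < abs theta &
      (forall p : {poly F}, p != 0 -> (map_poly iota p).[theta] != 0)] /\
  [/\ (forall u, (forall n, Kinf (u n)) -> seq_cauchy abs u ->
          exists l, Kinf l /\ seq_cvg abs u l) &
      (forall k, Kinf k -> forall e : R, 0 < e ->
          exists p q : {poly F}, (map_poly iota q).[theta] != 0 /\
            abs (k - (map_poly iota p).[theta] / (map_poly iota q).[theta]) < e)].

Definition algebraic_over (K : L -> Prop) : Prop :=
  forall x : L, exists p : {poly L}, [/\ p != 0, (forall i, K p`_i) & root p x].

Definition alg_over_Fq (iota : {rmorphism F -> L}) (x : L) : Prop :=
  exists p : {poly F}, p != 0 /\ root (map_poly iota p) x.

Definition in_Fq (iota : {rmorphism F -> L}) (x : L) : Prop := exists c, x = iota c.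

(* [E : K] >= n : E contains n elements linearly independent over K *)
Definition deg_ge (K E : L -> Prop) (n : nat) : Prop :=
  exists v : 'I_n -> L, (forall i, E (v i)) /\
    (forall c : 'I_n -> L, (forall i, K (c i)) ->
       \sum_(i < n) c i * v i = 0 -> forall i, c i = 0).

(* Drinfeld module phi_theta = sum_{j <= r} a j tau^j applied to x *)
Definition phi_apply (q : nat) (a : nat -> L) (r : nat) (x : L) : L :=
  \sum_(j < r.+1) a j * x ^+ (q ^ j)%N.

Definition phi_coef (theta : L) (r : nat) (j : nat) : L :=
  if j == 0%N then theta else if j == r then - theta else 0.

(* alpha is the coefficient sequence of exp_phi = sum alpha_i x^{q^i}:
   alpha_0 = 1 and exp_phi(theta x) = phi_theta(exp_phi(x)) as formal series
   (comparison of the coefficients of x^{q^n}) *)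
Definition is_exp_coeffs (q : nat) (theta : L) (a : nat -> L) (r : nat)
    (alpha : nat -> L) : Prop :=
  alpha 0%N = 1 /\
  forall n, alpha n * theta ^+ (q ^ n)%N =
    \sum_(j < r.+1 | (j <= n)%N) a j * alpha (n - j)%N ^+ (q ^ j)%N.

(* period lattice: zeros in L of exp_phi (the series converges to 0) *)
Definition lattice (q : nat) (abs : L -> R) (alpha : nat -> L) (x : L) : Prop :=
  seq_cvg abs (fun n => \sum_(i < n) alpha i * x ^+ (q ^ i)%N) 0.

Definition Kinf_lattice (q : nat) (abs : L -> R) (alpha : nat -> L)
    (Kinf : L -> Prop) : L -> Prop :=
  field_gen (fun x => Kinf x \/ lattice q abs alpha x).

End Defs.

(* Main.v *)
Require Import Defs.
From HB Require Import structures.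
From mathcomp Require Import all_boot all_order all_algebra.
From mathcomp Require Import reals.
From mathcomp Require Import all_field.
From mathcomp Require Import ring lra zify.
From Stdlib Require Import ClassicalEpsilon.
Import Order.TTheory GRing.Theory Num.Theory.
Local Open Scope ring_scope.

Module Aux.
Set Implicit Arguments. Unset Strict Implicit. Unset Printing Implicit Defensive.

Section Abs.
Variables (R : realType) (L : fieldType) (abs : L -> R).
Hypothesis Habs : nonarch_abs abs.

Lemma abs_ge0 x : 0 <= abs x. Proof. by case: Habs. Qed.
Lemma abs0 : abs 0 = 0. Proof. by case: Habs => _ H _ _; apply: (proj2 (H 0)). Qed.
Lemma abs_eq0 x : abs x = 0 -> x = 0. Proof. by case: Habs => _ H _ _; apply: (proj1 (H x)). Qed.
Lemma absM x y : abs (x * y) = abs x * abs y. Proof. by case: Habs. Qed.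
Lemma absD x y : abs (x + y) <= Num.max (abs x) (abs y). Proof. by case: Habs. Qed.
Lemma abs_neq0 x : x != 0 -> abs x != 0.
Proof. by move=> /eqP Hx; apply/eqP => /abs_eq0. Qed.
Lemma abs_gt0 x : x != 0 -> 0 < abs x.
Proof. by move=> /abs_neq0 H; rewrite lt_def H abs_ge0. Qed.
Lemma abs1 : abs 1 = 1.
Proof.
have H : abs 1 = abs 1 * abs 1 by rewrite -absM mulr1.
have H1 : abs 1 != 0 by apply: abs_neq0; exact: oner_neq0.
by apply: (mulfI H1); rewrite -H mulr1.
Qed.
Lemma absN x : abs (- x) = abs x.
Proof.
have H : abs (-1) = 1.
  have : abs (-1) ^+ 2 = 1 by rewrite expr2 -absM mulrNN mulr1 abs1.
  by move/eqP; rewrite pexpr_eq1 ?abs_ge0 // => /eqP.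
by rewrite -mulN1r absM H mul1r.
Qed.
Lemma absX x n : abs (x ^+ n) = abs x ^+ n.
Proof. by elim: n => [|n IH]; rewrite ?expr0 ?abs1 // !exprS absM IH. Qed.
Lemma absV x : abs (x^-1) = (abs x)^-1.
Proof.
have [->|nz] := eqVneq x 0; first by rewrite invr0 abs0 invr0.
have H : abs x * abs x^-1 = 1 by rewrite -absM mulfV // abs1.
by rewrite -[RHS]mulr1 -H mulrA mulVf ?mul1r // abs_neq0.
Qed.
Lemma absB x y : abs (x - y) = abs (y - x).
Proof. by rewrite -absN opprB. Qed.
Lemma absD_lt x y e : abs x < e -> abs y < e -> abs (x + y) < e.
Proof. move=> h1 h2; apply: le_lt_trans (absD x y) _; by rewrite gt_max h1 h2. Qed.
Lemma absD_le x y e : abs x <= e -> abs y <= e -> abs (x + y) <= e.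
Proof. move=> h1 h2; apply: le_trans (absD x y) _; by rewrite ge_max h1 h2. Qed.
Lemma absB_le x y e : abs x <= e -> abs y <= e -> abs (x - y) <= e.
Proof. by move=> h1 h2; apply: absD_le; rewrite ?absN. Qed.
Lemma absB_lt x y e : abs x < e -> abs y < e -> abs (x - y) < e.
Proof. by move=> h1 h2; apply: absD_lt; rewrite ?absN. Qed.
Lemma abs_strict x y : abs y < abs x -> abs (x + y) = abs x.
Proof.
move=> h; apply/eqP; rewrite eq_le; apply/andP; split.
  by apply: le_trans (absD x y) _; rewrite ge_max lexx ltW.
have : abs x <= Num.max (abs (x + y)) (abs (- y)).
  by rewrite -[x in abs x](addrK y); apply: absD.
rewrite absN le_max => /orP [] // h2; by move: (lt_le_trans h h2); rewrite ltxx.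
Qed.
Lemma abs_sum_le n (f : nat -> L) e : 0 <= e -> (forall i, (i < n)%N -> abs (f i) <= e) ->
  abs (\sum_(i < n) f i) <= e.
Proof.
move=> e0 H; elim/big_ind: _ => //; first by rewrite abs0.
  by move=> x y; apply: absD_le.
by move=> i _; apply: H.
Qed.
Lemma abs_sum_lt n (f : nat -> L) e : 0 < e -> (forall i, (i < n)%N -> abs (f i) < e) ->
  abs (\sum_(i < n) f i) < e.
Proof.
move=> e0 H; elim/big_ind: _ => //; first by rewrite abs0.
  by move=> x y; apply: absD_lt.
by move=> i _; apply: H.
Qed.

Lemma lim_le (s : nat -> L) l a B N0 : (forall n, (N0 <= n)%N -> abs (s n - a) <= B) ->
  seq_cvg abs s l -> abs (l - a) <= B.
Proof.
move=> H Hl; rewrite leNgt; apply/negP => hB.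
have e0 : 0 < abs (l - a) by apply: le_lt_trans hB; apply: le_trans (H N0 (leqnn _)); exact: abs_ge0.
have [N HN] := Hl _ e0.
have h1 := HN (maxn N N0) (leq_maxl _ _).
have h2 := H (maxn N N0) (leq_maxr _ _).
have : abs (l - a) < abs (l - a).
  have E : l - a = (s (maxn N N0) - a) - (s (maxn N N0) - l) by ring.
  rewrite {1}E; apply: absB_lt; [exact: le_lt_trans h2 hB | exact: h1].
by rewrite ltxx.
Qed.

Lemma lim_unique (s : nat -> L) l1 l2 : seq_cvg abs s l1 -> seq_cvg abs s l2 -> l1 = l2.
Proof.
move=> H1 H2; apply/eqP; rewrite -subr_eq0; apply/eqP/abs_eq0.
apply/eqP; rewrite eq_le abs_ge0 andbT; rewrite leNgt; apply/negP => h.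
have [N1 HN1] := H1 _ h; have [N2 HN2] := H2 _ h.
have h1 := HN1 (maxn N1 N2) (leq_maxl _ _).
have h2 := HN2 (maxn N1 N2) (leq_maxr _ _).
have : abs (l1 - l2) < abs (l1 - l2).
  have E : l1 - l2 = (s (maxn N1 N2) - l2) - (s (maxn N1 N2) - l1) by ring.
  by rewrite {1}E; apply: absB_lt.
by rewrite ltxx.
Qed.

Lemma cvgB (s t : nat -> L) a b : seq_cvg abs s a -> seq_cvg abs t b ->
  seq_cvg abs (fun n => s n - t n) (a - b).
Proof.
move=> Hs Ht e e0; have [N1 H1] := Hs e e0; have [N2 H2] := Ht e e0.
exists (maxn N1 N2) => n hn.
have -> : s n - t n - (a - b) = (s n - a) - (t n - b) by ring.
apply: absB_lt; [apply: H1 | apply: H2]; apply: leq_trans hn; [exact: leq_maxl | exact: leq_maxr].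
Qed.

Lemma cvg_ext (s t : nat -> L) a : (forall n, s n = t n) -> seq_cvg abs s a -> seq_cvg abs t a.
Proof. by move=> H Hs e e0; have [N HN] := Hs e e0; exists N => n hn; rewrite -H; apply: HN. Qed.

Lemma cvgZ (s : nat -> L) c : seq_cvg abs s 0 -> seq_cvg abs (fun n => c * s n) 0.
Proof.
move=> Hs e e0; have [->|cnz] := eqVneq c 0.
  by exists 0%N => n _; rewrite mul0r subr0 abs0.
have hc := abs_gt0 cnz.
have [N HN] := Hs (e / abs c) (divr_gt0 e0 hc).
exists N => n hn; rewrite subr0 absM -ltr_pdivlMl //.
by rewrite mulrC; move: (HN n hn); rewrite subr0.
Qed.

End Abs.


Section Subfield.
Variables (L : fieldType) (P : L -> Prop) (HP : is_subfield P).
Lemma sf0 : P 0. Proof. by case: HP. Qed.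
Lemma sf1 : P 1. Proof. by case: HP. Qed.
Lemma sfB x y : P x -> P y -> P (x - y). Proof. by case: HP => _ _ H _ _; apply: H. Qed.
Lemma sfM x y : P x -> P y -> P (x * y). Proof. by case: HP => _ _ _ H _; apply: H. Qed.
Lemma sfV x : P x -> P (x^-1).
Proof. move=> h; have [->|nz] := eqVneq x 0; first by rewrite invr0; apply: sf0. by case: HP => _ _ _ _ H; apply: H. Qed.
Lemma sfN x : P x -> P (- x). Proof. by move=> h; rewrite -sub0r; apply: sfB => //; apply: sf0. Qed.
Lemma sfD x y : P x -> P y -> P (x + y). Proof. by move=> h1 h2; rewrite -[y]opprK; apply: sfB => //; apply: sfN. Qed.
Lemma sfX x n : P x -> P (x ^+ n).
Proof. move=> h; elim: n => [|n IH]; first by rewrite expr0; apply: sf1. by rewrite exprS; apply: sfM. Qed.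
Lemma sf_div x y : P x -> P y -> P (x / y). Proof. by move=> h1 h2; apply: sfM => //; apply: sfV. Qed.
Lemma sf_sum n (f : nat -> L) : (forall i, P (f i)) -> P (\sum_(i < n) f i).
Proof. move=> H; elim/big_ind: _ => //; [exact: sf0 | exact: sfD]. Qed.
End Subfield.

Section Frob.
Variables (L : fieldType) (q : nat) (q0 : (0 < q)%N).
Hypothesis Hfrob : forall x y : L, (x + y) ^+ q = x ^+ q + y ^+ q.
Lemma frobD n (x y : L) : (x + y) ^+ (q ^ n) = x ^+ (q ^ n) + y ^+ (q ^ n).
Proof. elim: n => [|n IH]; first by rewrite expn0 !expr1. by rewrite expnSr !exprM IH Hfrob. Qed.
Lemma frobN n (x : L) : (- x) ^+ (q ^ n) = - x ^+ (q ^ n).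
Proof.
apply/eqP; rewrite -addr_eq0 addrC -frobD subrr expr0n /=.
by rewrite eqn0Ngt expn_gt0 q0.
Qed.
Lemma frobB n (x y : L) : (x - y) ^+ (q ^ n) = x ^+ (q ^ n) - y ^+ (q ^ n).
Proof. by rewrite frobD frobN. Qed.
Lemma frob_sum n m (f : nat -> L) : (\sum_(i < m) f i) ^+ (q ^ n) = \sum_(i < m) (f i) ^+ (q ^ n).
Proof.
elim/big_rec2: _ => [|i y1 y2 _ <-]; last by rewrite frobD.
by rewrite expr0n /= eqn0Ngt expn_gt0 q0.
Qed.
End Frob.

Lemma pow_small (R : realType) (eps e : R) : 0 <= eps -> eps < 1 -> 0 < e ->
  exists N, eps ^+ N < e.
Proof.
move=> e0 e1 ep; have [->|nz] := eqVneq eps 0; first by exists 1%N; rewrite expr1.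
have epsp : 0 < eps by rewrite lt_def nz e0.
set t := eps^-1; set d := t - 1.
have t1 : 1 < t by rewrite /t invf_gt1.
have d0 : 0 < d by rewrite /d subr_gt0.
have bern : forall N, 1 + N%:R * d <= t ^+ N.
  elim=> [|N IH]; first by rewrite mul0r addr0 expr0.
  rewrite exprS; have : t * (1 + N%:R * d) <= t * t ^+ N by rewrite ler_pM2l // (lt_trans _ t1).
  apply: le_trans; rewrite /d -natr1.
  have hN0 : 0 <= N%:R :> R by apply: ler0n.
  have := mulr_ge0 hN0 (sqr_ge0 (t - 1)); nra.
have x0 : 0 <= e^-1 / d by rewrite divr_ge0 // ltW // invr_gt0.
set N := Num.Def.archi_bound (e^-1 / d).
have hN := archi_boundP x0; exists N.
have h1 : e^-1 < t ^+ N.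
  apply: lt_le_trans (bern N); rewrite -ltrBlDl.
  have : e^-1 / d * d < N%:R * d by rewrite ltr_pM2r.
  by rewrite mulfVK ?gt_eqF //; lra.
rewrite /t exprVn in h1.
have eNp : 0 < eps ^+ N by rewrite exprn_gt0.
by rewrite -(ltf_pV2 (x:=e) (y:=eps ^+ N)) ?posrE.
Qed.


Section Core.
Variables (R : realType) (L : fieldType) (abs : L -> R) (K : L -> Prop).
Hypothesis Habs : nonarch_abs abs.
Hypothesis HK : is_subfield K.
Hypothesis Hcomp : forall u, (forall n, K (u n)) -> seq_cauchy abs u ->
          exists l, K l /\ seq_cvg abs u l.
Variable q : nat.
Hypothesis q2 : (2 <= q)%N.
Hypothesis Hfrob : forall x y : L, (x + y) ^+ q = x ^+ q + y ^+ q.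
Variable C : nat -> L.
Hypothesis HC0 : C 0%N = 1.
Hypothesis HCK : forall i, K (C i).
Hypothesis HC1 : forall i, abs (C i) <= 1.
Hypothesis HCcvg : forall e : R, 0 < e -> exists N, forall i, (N <= i)%N -> abs (C i) < e.
Variable eps : R.
Hypothesis eps0 : 0 <= eps.
Hypothesis eps1 : eps < 1.
Hypothesis Hh1 : exists N0, forall n, (N0 <= n)%N -> abs (\sum_(i < n) C i) <= eps.

Let q0 : (0 < q)%N. Proof. exact: leq_trans q2. Qed.

Definition ps z n := \sum_(i < n) C i * z ^+ (q ^ i).

Lemma psB z w n : ps (z - w) n = ps z n - ps w n.
Proof.
rewrite /ps -sumrB; apply: eq_bigr => i _.
by rewrite (frobB q0 Hfrob) mulrBr.
Qed.

Lemma powle (x : R) n : 0 <= x -> x <= 1 -> (0 < n)%N -> x ^+ n <= x.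
Proof. by move=> h0 h1 hn; rewrite -{2}[x]expr1; apply: ler_wiXn2l. Qed.

Lemma term_le z i : abs z <= 1 -> abs (C i * z ^+ (q ^ i)) <= abs z.
Proof.
move=> hz; rewrite absM // absX //.
apply: le_trans (_ : 1 * abs z ^+ (q ^ i) <= _).
  by apply: ler_wpM2r; rewrite ?exprn_ge0 ?abs_ge0.
by rewrite mul1r powle ?abs_ge0 // expn_gt0 q0.
Qed.

Lemma ps_cauchy z : abs z <= 1 -> seq_cauchy abs (ps z).
Proof.
move=> hz e e0; have [N HN] := HCcvg e0.
have H : forall m, (N <= m)%N -> abs (ps z m - ps z N) < e.
  elim=> [|m IH] hm.
    by move: hm; rewrite leqn0 => /eqP ->; rewrite subrr abs0.
  case: (eqVneq N m.+1) => [<-|ne]; first by rewrite subrr abs0.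
  have hm' : (N <= m)%N by rewrite -ltnS ltn_neqAle ne hm.
  rewrite /ps big_ord_recr /= -/(ps z m) addrAC; apply: absD_lt => //; first exact: IH.
  rewrite absM // absX //.
  have h1 : abs z ^+ (q ^ m) <= 1 by apply: exprn_ile1 => //; exact: abs_ge0.
  have h2 := HN m hm'.
  have h3 := abs_ge0 Habs (C m).
  have h4 : 0 <= abs z ^+ (q ^ m) by rewrite exprn_ge0 // abs_ge0.
  nra.
exists N => m n hm hn.
have -> : ps z m - ps z n = (ps z m - ps z N) - (ps z n - ps z N) by ring.
by apply: (absB_lt Habs); apply: H.
Qed.

Lemma ps_K z n : K z -> K (ps z n).
Proof. by move=> hz; apply: (sf_sum HK n (f:=fun i => C i * z ^+ (q ^ i))) => i; apply: (sfM HK) => //; apply: (sfX HK). Qed.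

Definition hlim z := epsilon (inhabits 0) (fun l => K l /\ seq_cvg abs (ps z) l).

Lemma hP z : K z -> abs z <= 1 -> K (hlim z) /\ seq_cvg abs (ps z) (hlim z).
Proof.
move=> kz hz; apply: (epsilon_spec (inhabits 0) (fun l => K l /\ seq_cvg abs (ps z) l)); apply: Hcomp; last exact: ps_cauchy.
by move=> n; apply: ps_K.
Qed.

Lemma hb1 z : K z -> abs z <= 1 -> abs (hlim z) <= abs z.
Proof.
move=> kz hz; have [_ hc] := hP kz hz.
rewrite -[hlim z]subr0; apply: (lim_le Habs (N0 := 0%N) _ hc) => n _.
by rewrite subr0; apply: (abs_sum_le Habs (f:=fun i => C i * z ^+ (q ^ i))) => [|i _]; [exact: abs_ge0 | exact: term_le].
Qed.

Lemma hb2 y : K y -> abs y <= 1 -> abs (hlim y - y) <= abs y ^+ q.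
Proof.
move=> ky hy; have [_ hc] := hP ky hy.
apply: (lim_le Habs (N0 := 1%N) _ hc) => -[|n] // _.
rewrite /ps big_ord_recl /= HC0 mul1r expn0 expr1 addrAC subrr add0r.
apply: (abs_sum_le Habs (f:=fun i => C i.+1 * y ^+ (q ^ i.+1))) => [|i _]; first by rewrite exprn_ge0 // abs_ge0.
rewrite absM // absX //; apply: le_trans (_ : 1 * abs y ^+ (q ^ i.+1) <= _).
  by apply: ler_wpM2r; rewrite ?exprn_ge0 ?abs_ge0.
rewrite mul1r; apply: ler_wiXn2l; rewrite ?abs_ge0 //.
by rewrite -{1}[q]expn1 leq_pexp2l.
Qed.

Lemma hb0 : abs (hlim 1) <= eps.
Proof.
have h1 : abs 1 <= 1 by rewrite (abs1 Habs).
have [_ hc] := hP (sf1 HK) h1.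
have [N0 HN] := Hh1.
rewrite -[hlim 1]subr0; apply: (lim_le Habs (N0 := N0) _ hc) => n hn.
rewrite subr0 /ps; under eq_bigr do rewrite expr1n mulr1; exact: HN.
Qed.

Lemma h_sub z w : K z -> K w -> abs z <= 1 -> abs w <= 1 -> hlim (z - w) = hlim z - hlim w.
Proof.
move=> kz kw hz hw.
have kzw : K (z - w) by apply: (sfB HK).
have hzw : abs (z - w) <= 1 by apply: (absB_le Habs).
have [_ c1] := hP kzw hzw; have [_ c2] := hP kz hz; have [_ c3] := hP kw hw.
apply: (lim_unique Habs c1); apply: (cvg_ext (s := fun n => ps z n - ps w n)).
  by move=> n; rewrite psB.
exact: (cvgB Habs).
Qed.

Fixpoint zs n := if n is n'.+1 then zs n' - hlim (zs n') else 1.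

Lemma zs_inv n : [/\ K (zs n), abs (zs n - 1) <= eps & abs (hlim (zs n)) <= eps ^+ n.+1].
Proof.
have eps_le1 : eps <= 1 by apply: ltW.
elim: n => [|n [k1 k2 k3]] /=.
  by rewrite subrr (abs0 Habs) eps0 expr1 hb0; split => //; apply: (sf1 HK).
have hz : abs (zs n) <= 1.
  rewrite -(subrK 1 (zs n)); apply: (absD_le Habs) => //; first exact: le_trans k2 _.
  by rewrite (abs1 Habs).
set y := hlim (zs n).
have [ky _] := hP k1 hz.
have hyn : abs y <= eps ^+ n.+1 by [].
have hye : abs y <= eps by apply: le_trans hyn _; apply: powle.
have hy1 : abs y <= 1 by apply: le_trans hye _.
split.
- by apply: (sfB HK).
- by rewrite addrAC; apply: (absB_le Habs).
- rewrite h_sub // -/y -(absN Habs) opprB.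
  apply: le_trans (hb2 ky hy1) _.
  have y0 := abs_ge0 Habs y.
  apply: le_trans (_ : abs y ^+ 2 <= _).
    by apply: ler_wiXn2l.
  rewrite expr2 exprS mulrC; apply: ler_pM => //.
Qed.

Lemma zs_diff n m : (n <= m)%N -> abs (zs m - zs n) <= eps ^+ n.+1.
Proof.
elim: m => [|m IH] hm.
  by move: hm; rewrite leqn0 => /eqP ->; rewrite subrr (abs0 Habs) exprn_ge0.
case: (eqVneq n m.+1) => [->|ne]; first by rewrite subrr (abs0 Habs) exprn_ge0.
have hm' : (n <= m)%N by rewrite -ltnS ltn_neqAle ne hm.
rewrite /= addrAC; apply: (absB_le Habs); first exact: IH.
have [_ _ k3] := zs_inv m.
apply: le_trans k3 _; apply: ler_wiXn2l => //; exact: ltW.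
Qed.

Lemma newton : exists z, [/\ K z, abs (z - 1) <= eps & seq_cvg abs (ps z) 0].
Proof.
have eps_le1 : eps <= 1 by apply: ltW.
have cz : seq_cauchy abs zs.
  move=> e e0; have [N HN] := pow_small eps0 eps1 e0.
  exists N => m n hm hn.
  have -> : zs m - zs n = (zs m - zs N) - (zs n - zs N) by ring.
  have hN : eps ^+ N.+1 < e by apply: le_lt_trans HN; apply: ler_wiXn2l.
  by apply: (absB_lt Habs); apply: le_lt_trans hN; apply: zs_diff.
have kzs : forall n, K (zs n) by move=> n; have [] := zs_inv n.
have [z [kz cvz]] := Hcomp kzs cz.
have hz1 : abs (z - 1) <= eps.
  by apply: (lim_le Habs (N0 := 0%N) _ cvz) => n _; have [] := zs_inv n.
have hz : abs z <= 1.
  rewrite -(subrK 1 z); apply: (absD_le Habs) => //; first exact: le_trans hz1 _.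
  by rewrite (abs1 Habs).
have hzn : forall n, abs (z - zs n) <= eps ^+ n.+1.
  move=> n; apply: (lim_le Habs (N0 := n) _ cvz) => m hm; exact: zs_diff.
have hh : forall n, abs (hlim z) <= eps ^+ n.+1.
  move=> n; have [k1 k2 k3] := zs_inv n.
  have hzs : abs (zs n) <= 1.
    rewrite -(subrK 1 (zs n)); apply: (absD_le Habs) => //; first exact: le_trans k2 _.
    by rewrite (abs1 Habs).
  rewrite -(subrK (hlim (zs n)) (hlim z)) -h_sub //.
  apply: (absD_le Habs) => //.
  apply: le_trans (hzn n); apply: hb1; first exact: (sfB HK).
  by apply: (absB_le Habs).
have h0 : hlim z = 0.
  apply: (abs_eq0 Habs); apply/eqP; rewrite eq_le abs_ge0 // andbT leNgt; apply/negP => hp.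
  have [N HN] := pow_small eps0 eps1 hp.
  have := le_lt_trans (hh N) (le_lt_trans (ler_wiXn2l eps0 eps_le1 (leqnSn N)) HN).
  by rewrite ltxx.
exists z; split => //; have [_ ] := hP kz hz; by rewrite h0.
Qed.

End Core.


Lemma frobL (F : finFieldType) (L : fieldType) (iota : {rmorphism F -> L}) (x y : L) :
  (x + y) ^+ #|F| = x ^+ #|F| + y ^+ #|F|.
Proof.
have [p _ pF] := finPcharP F; have pL := rmorph_pchar iota pF.
rewrite (card_pprimeChar pF); elim: (logn _ _) => [|n IH]; first by rewrite !expr1.
by rewrite expnSr !exprM IH -!(pFrobenius_autE pL) rmorphD.
Qed.

Section Drin.
Variables (R : realType) (F : finFieldType) (L : fieldType) (iota : {rmorphism F -> L})
  (abs : L -> R) (theta : L) (Kinf : L -> Prop).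
Hypothesis Habs : nonarch_abs abs.
Hypothesis HKi : is_Kinfty iota abs theta Kinf.
Local Notation q := #|F|.

Lemma q2 : (2 <= q)%N. Proof. exact: finNzRing_gt1. Qed.
Lemma q0 : (0 < q)%N. Proof. exact: ltnW q2. Qed.
Lemma HK : is_subfield Kinf. Proof. by case: HKi => -[]. Qed.
Lemma Kth : Kinf theta. Proof. by case: HKi => -[]. Qed.
Lemma T1 : 1 < abs theta. Proof. by case: HKi => -[]. Qed.
Lemma Hcomp : forall u, (forall n, Kinf (u n)) -> seq_cauchy abs u ->
          exists l, Kinf l /\ seq_cvg abs u l.
Proof. by case: HKi => _ []. Qed.

Local Notation T := (abs theta).
Lemma T0 : 0 < T. Proof. exact: lt_trans T1. Qed.
Lemma th0 : theta != 0.
Proof. by apply/eqP => h; move: T1; rewrite h (abs0 Habs) ltr10. Qed.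

Lemma abs_thm m : (2 <= m)%N -> abs (theta ^+ m - theta) = T ^+ m.
Proof.
move=> hm; rewrite (abs_strict Habs) (absX Habs) // (absN Habs).
by rewrite -{1}[T]expr1 ltr_eXn2l ?T1.
Qed.

Lemma qpow_ge2 n : (0 < n)%N -> (2 <= q ^ n)%N.
Proof.
move=> hn; apply: leq_trans q2 _; rewrite -{1}[q]expn1 leq_pexp2l //; exact: q0.
Qed.

Variable r : nat.
Hypothesis r1 : (1 <= r)%N.
Variable alpha : nat -> L.
Hypothesis Hal : is_exp_coeffs q theta (phi_coef theta r) r alpha.

Lemma rhs_eq n : \sum_(j < r.+1 | (j <= n)%N) phi_coef theta r j * alpha (n - j)%N ^+ (q ^ j)%N
  = theta * alpha n + (if (r <= n)%N then - theta * alpha (n - r)%N ^+ (q ^ r) else 0).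
Proof.
case: r r1 => [//|r'] _.
rewrite big_mkcond big_ord_recl /= big_ord_recr /= subn0 expn0 expr1 {1}/phi_coef /=.
rewrite big1 ?add0r; last first.
  move=> i _; case: ifP => // _; rewrite /phi_coef /=.
  by rewrite eqn_leq ltnNge ltn_ord andbF mul0r.
rewrite /phi_coef /= eqxx; case: ifP => _; first by rewrite mulNr.
by [].
Qed.

Lemma alpha_eq n : alpha n * (theta ^+ (q ^ n) - theta) =
  (if (r <= n)%N then - theta * alpha (n - r)%N ^+ (q ^ r) else 0).
Proof.
have [_ H] := Hal; have := H n; rewrite rhs_eq => E.
by rewrite mulrBr E addrAC mulrC subrr add0r.
Qed.

Lemma alpha_zero n : ~~ (r %| n)%N -> alpha n = 0.
Proof.
elim/ltn_ind: n => n IH hn.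
have n0 : (0 < n)%N by case: n {IH} hn => //; rewrite dvdn0.
have nz : theta ^+ (q ^ n) - theta != 0.
  apply/eqP => h; have := abs_thm (qpow_ge2 n0); rewrite h (abs0 Habs) => h2.
  by move: (exprn_gt0 (q ^ n) T0); rewrite -h2 ltxx.
apply/eqP; rewrite -(mulIr_eq0 _ (mulIf nz)) alpha_eq.
case: ifP => // hr.
have hlt : (n - r < n)%N by rewrite ltn_subrL n0 andbT.
rewrite IH //; last first.
  apply/negP => hd; move/negP: hn; apply; rewrite -(subnK hr); exact: dvdn_add.
have -> : (0:L) ^+ (q ^ r) = 0 by apply/eqP; rewrite expf_eq0 eqxx andbT expn_gt0 q0.
by rewrite mulr0.
Qed.

Lemma thpow_nz m : theta ^+ m != 0. Proof. by rewrite expf_neq0 // th0. Qed.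

Lemma thm_nz m : (2 <= m)%N -> theta ^+ m - theta != 0.
Proof.
move=> hm; apply/eqP => h; have := abs_thm hm; rewrite h (abs0 Habs) => h2.
by move: (exprn_gt0 m T0); rewrite -h2 ltxx.
Qed.

Lemma Nk_ge2 k : (2 <= q ^ (k.+1 * r))%N.
Proof. by apply: qpow_ge2; rewrite muln_gt0. Qed.

Lemma alpha_rec k : alpha (k.+1 * r)%N * (theta ^+ (q ^ (k.+1 * r)) - theta) =
  - theta * alpha (k * r)%N ^+ (q ^ r).
Proof.
rewrite alpha_eq ifT; last by rewrite leq_pmull.
by rewrite mulSn addKn.
Qed.

Lemma alpha_K n : Kinf (alpha n).
Proof.
have HK := HK.
case/boolP: (r %| n)%N => hd; last by rewrite alpha_zero //; apply: (sf0 HK).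
rewrite -(divnK hd); elim: (n %/ r)%N => [|k IH]; first by rewrite mul0n; case: Hal => -> _; apply: (sf1 HK).
have E := alpha_rec k.
have -> : alpha (k.+1 * r)%N = - theta * alpha (k * r)%N ^+ (q ^ r) / (theta ^+ (q ^ (k.+1 * r)) - theta).
  by rewrite -E mulfK // thm_nz // Nk_ge2.
apply: (sf_div HK); first by apply: (sfM HK); [apply: (sfN HK); exact: Kth | exact: (sfX HK)].
by apply: (sfB HK); [apply: (sfX HK); exact: Kth | exact: Kth].
Qed.

Definition C i := alpha i * theta ^+ (q ^ i) / theta.

Lemma C0 : C 0 = 1.
Proof. by rewrite /C; case: Hal => -> _; rewrite mul1r expn0 expr1 mulfV // th0. Qed.

Lemma CK i : Kinf (C i).
Proof.
have HK := HK; apply: (sf_div HK); last exact: Kth.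
by apply: (sfM HK); [exact: alpha_K | apply: (sfX HK); exact: Kth].
Qed.

Lemma C_zero i : ~~ (r %| i)%N -> C i = 0.
Proof. by move=> h; rewrite /C alpha_zero // !mul0r. Qed.

Lemma C_rec k : C (k.+1 * r) * (theta ^+ (q ^ (k.+1 * r)) - theta) =
  - (C (k * r) ^+ (q ^ r)) * theta ^+ (q ^ r).
Proof.
have E := alpha_rec k.
have eN : (q ^ (k.+1 * r) = q ^ (k * r) * q ^ r)%N by rewrite -expnD mulSn addnC.
rewrite /C !exprMn -!exprM -eN exprVn.
set N := (q ^ (k.+1 * r))%N; set Q := (q ^ r)%N.
set a1 := alpha (k.+1 * r)%N; set a0 := alpha (k * r)%N.
set tN := theta ^+ N; set tQ := theta ^+ Q.
have hQ : tQ != 0 by apply: thpow_nz.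
have th := th0.
have E' : a1 * (tN - theta) = - theta * a0 ^+ Q by exact: E.
clearbody tQ tN a0 a1 N Q.
have -> : a1 * tN / theta * (tN - theta) = (a1 * (tN - theta)) * tN / theta by ring.
rewrite E'; field.
by rewrite th hQ.
Qed.

Local Notation eps := (T^-1).
Lemma eps0 : 0 <= eps. Proof. by rewrite invr_ge0 ltW // T0. Qed.
Lemma eps1 : eps < 1. Proof. by rewrite invf_lt1 ?T0 ?T1. Qed.

Lemma absC_rec k : abs (C (k.+1 * r)) * T ^+ (q ^ (k.+1 * r)) =
  abs (C (k * r)) ^+ (q ^ r) * T ^+ (q ^ r).
Proof.
have := congr1 abs (C_rec k).
rewrite (absM Habs (C _)) (absM Habs (- _)) (abs_thm (Nk_ge2 k)) (absN Habs) (absX Habs (C _)) (absX Habs theta); apply.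
Qed.

Lemma absCr : abs (C r) = 1.
Proof.
have := absC_rec 0; rewrite mul0n mul1n C0 (abs1 Habs) expr1n mul1r.
move=> h; apply: (mulIf (x := T ^+ (q ^ r))); last by rewrite h mul1r.
by rewrite expf_neq0 // gt_eqF // T0.
Qed.

Lemma Tpow_le m n : (m <= n)%N -> T ^+ m <= T ^+ n.
Proof. by move=> h; rewrite ler_eXn2l ?T1. Qed.

Lemma Cbound k : abs (C (k.+1 * r)) <= eps ^+ k.
Proof.
elim: k => [|k IH]; first by rewrite mul1n absCr expr0.
have hQN : ((q ^ r).+1 <= q ^ (k.+2 * r))%N.
  have Q2 : (2 <= q ^ r)%N by apply: qpow_ge2.
  apply: leq_trans (_ : (q ^ r * q ^ r <= _)%N).
    by move: Q2; set Q := (q ^ r)%N; move=> Q2; nia.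
  by rewrite -expnD leq_pexp2l ?q0 // mulSn addnA leq_addr.
have a0 := abs_ge0 Habs (C (k.+2 * r)).
have b0 := abs_ge0 Habs (C (k.+1 * r)).
move: (absC_rec k.+1) IH a0 b0.
move: (abs (C (k.+2 * r))) (abs (C (k.+1 * r))) => a b E IH a0 b0.
move: hQN E; set Q := (q ^ r)%N; set N := (q ^ (k.+2 * r))%N => hQN E.
have b1 : b <= 1 by apply: le_trans IH _; apply: exprn_ile1; [exact: eps0 | exact: ltW eps1].
have hbQ : b ^+ Q <= b by apply: powle => //; rewrite /Q expn_gt0 q0.
have TN : T ^+ Q.+1 <= T ^+ N by apply: Tpow_le.
have TQ : 0 < T ^+ Q by rewrite exprn_gt0 // T0.
have hT := T0.
rewrite exprS in TN.
have H1 : a * (T * T ^+ Q) <= b * T ^+ Q.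
  apply: le_trans (_ : a * T ^+ N <= _); first by apply: ler_wpM2l.
  by rewrite E; apply: ler_wpM2r => //; apply: ltW.
have H2 : a * T <= b.
  by rewrite -(ler_pM2r TQ) -mulrA.
rewrite exprSr; apply: le_trans (_ : b * eps <= _); last by apply: ler_wpM2r => //; exact: eps0.
by rewrite ler_pdivlMr // .
Qed.

Lemma C1r : abs (1 + C r) <= eps.
Proof.
have E0 := C_rec 0; rewrite mul0n mul1n C0 expr1n mulN1r in E0.
have E : (1 + C r) * (theta ^+ (q ^ r) - theta) = - theta.
  by rewrite mulrDl E0 mul1r; ring.
have := congr1 abs E; rewrite (absM Habs) (abs_thm (qpow_ge2 r1)) (absN Habs).
set a := abs _ => h.
have a0 : 0 <= a by apply: abs_ge0.
have hT := T1.
have T2 : T ^+ 2 <= T ^+ (q ^ r) by apply: Tpow_le; apply: qpow_ge2.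
have : a * T ^+ 2 <= a * T ^+ (q ^ r) by apply: ler_wpM2l.
rewrite h.
rewrite expr2 => h2.
have T0' := T0.
have h3 : a * T <= 1 by nra.
by rewrite -(ler_pM2r T0') mulVf ?gt_eqF.
Qed.

Lemma eps_le1 : eps <= 1. Proof. exact: ltW eps1. Qed.

Lemma Cle1 i : abs (C i) <= 1.
Proof.
case/boolP: (r %| i)%N => hd; last by rewrite C_zero // (abs0 Habs).
rewrite -(divnK hd); case: (i %/ r)%N => [|k]; first by rewrite mul0n C0 (abs1 Habs).
apply: le_trans (Cbound k) _; apply: exprn_ile1; [exact: eps0 | exact: eps_le1].
Qed.

Lemma Cbig i : abs (C i) <= eps \/ i = 0%N \/ i = r.
Proof.
case/boolP: (r %| i)%N => hd; last by left; rewrite C_zero // (abs0 Habs) eps0.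
rewrite -(divnK hd); case: (i %/ r)%N => [|[|k]]; first by right; left; rewrite mul0n.
  by right; right; rewrite mul1n.
left; apply: le_trans (Cbound k.+1) _; rewrite -{2}[eps]expr1.
apply: ler_wiXn2l => //; [exact: eps0 | exact: eps_le1].
Qed.

Lemma Ccvg e : 0 < e -> exists N, forall i, (N <= i)%N -> abs (C i) < e.
Proof.
move=> e0; have [N0 HN] := pow_small eps0 eps1 e0.
exists (N0.+1 * r)%N => i hi.
case/boolP: (r %| i)%N => hd; last by rewrite C_zero // (abs0 Habs).
move: hi; rewrite -(divnK hd); case: (i %/ r)%N => [|k].
  by rewrite mul0n leqn0 muln_eq0 /= => /eqP r0; move: r1; rewrite r0.
rewrite leq_pmul2r // ltnS => hk.
apply: le_lt_trans (Cbound k) _; apply: le_lt_trans HN.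
apply: ler_wiXn2l => //; [exact: eps0 | exact: eps_le1].
Qed.

Definition Ex i := if (i == 0%N) || (i == r) then 0 else C i.

Lemma sumC n : \sum_(i < n) C i =
  (if (0 < n)%N then 1 else 0) + (if (r < n)%N then C r else 0) + \sum_(i < n) Ex i.
Proof.
elim: n => [|n IH]; first by rewrite !big_ord0 ltnn ltn0 !addr0.
rewrite !big_ord_recr /= IH /Ex.
case: (eqVneq n 0%N) => [->|n0] /=.
  by rewrite ltnNge r1 C0 /=; ring.
case: (eqVneq n r) => [->|nr] /=.
  by rewrite r1 ltnn ltnSn; ring.
rewrite (lt0n n) n0 /= ltnS [(r <= n)%N]leq_eqVlt eq_sym (negbTE nr) /=.
ring.
Qed.

Lemma Hh1 : exists N0, forall n, (N0 <= n)%N -> abs (\sum_(i < n) C i) <= eps.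
Proof.
exists r.+1 => n hn; rewrite sumC (ltn_trans _ hn) // ?r1 //.
rewrite (leq_trans _ hn) //; apply: (absD_le Habs); first exact: C1r.
apply: (abs_sum_le Habs (f := Ex)) => [|i _]; first exact: eps0.
rewrite /Ex; case: ifP => [_|/norP[i0 ir]]; first by rewrite (abs0 Habs) eps0.
case: (Cbig i) => [//|[]] h; [by move: i0; rewrite h | by move: ir; rewrite h eqxx].
Qed.

Lemma period : exists w, [/\ Kinf w, w != 0 & lattice q abs alpha w].
Proof.
have [z [kz hz1 cz]] := newton Habs HK Hcomp q2 (frobL iota) C0 CK Cle1 Ccvg eps0 eps1 Hh1.
exists (theta * z); split.
- by apply: (sfM HK) => //; exact: Kth.
- rewrite mulf_neq0 ?th0 //; apply/eqP => z0; move: hz1.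
  rewrite z0 sub0r (absN Habs) (abs1 Habs) => h; move: (le_lt_trans h eps1); by rewrite ltxx.
- rewrite /lattice; apply: (cvg_ext (s := fun n => theta * ps q C z n)); last exact: (cvgZ Habs).
  move=> n; rewrite /ps mulr_sumr; apply: eq_bigr => i _.
  rewrite /C exprMn; have := th0; move: (alpha i) (theta ^+ (q ^ i)) (z ^+ (q ^ i)) => a b c h.
  by field.
Qed.

Lemma powQk (x : L) k : x ^+ (q ^ r) = x -> x ^+ (q ^ (k * r)) = x.
Proof.
move=> hx; rewrite mulnC expnM; elim: k => [|k IH]; first by rewrite expr1.
by rewrite expnSr exprM IH hx.
Qed.

Lemma lattice_scale w x : lattice q abs alpha w -> x ^+ (q ^ r) = x ->
  lattice q abs alpha (x * w).
Proof.
move=> hw hx; rewrite /lattice.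
apply: (cvg_ext (s := fun n => x * \sum_(i < n) alpha i * w ^+ (q ^ i))); last exact: (cvgZ Habs).
move=> n; rewrite mulr_sumr; apply: eq_bigr => i _.
case/boolP: (r %| i)%N => hd; last by rewrite alpha_zero // !mul0r mulr0.
by rewrite exprMn -(divnK hd) (powQk _ hx); ring.
Qed.

Lemma in_lattice_field x : x ^+ (q ^ r) = x -> Kinf_lattice q abs alpha Kinf x.
Proof.
move=> hx; have [w [kw w0 lw]] := period.
move=> P HP Hgen.
have pw : P w by apply: Hgen; right.
have pxw : P (x * w) by apply: Hgen; right; apply: lattice_scale.
have -> : x = (x * w) * w^-1 by rewrite mulfK.
by apply: (sfM HP) => //; apply: (sfV HP).
Qed.

End Drin.


Section Res.
Variables (R : realType) (F : finFieldType) (L : fieldType) (iota : {rmorphism F -> L})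
  (abs : L -> R) (theta : L) (Kinf : L -> Prop).
Hypothesis Habs : nonarch_abs abs.
Hypothesis HKi : is_Kinfty iota abs theta Kinf.
Local Notation q := #|F|.
Local Notation T := (abs theta).

Lemma dens k : Kinf k -> forall e : R, 0 < e ->
  exists p qq : {poly F}, (map_poly iota qq).[theta] != 0 /\
    abs (k - (map_poly iota p).[theta] / (map_poly iota qq).[theta]) < e.
Proof. by case: HKi => _ [_ H]; apply: H. Qed.

Lemma iota_frob c : iota c ^+ q = iota c.
Proof. by rewrite -rmorphXn expf_card. Qed.

Lemma abs_iota c : c != 0 -> abs (iota c) = 1.
Proof.
move=> cnz; have inz : iota c != 0 by rewrite fmorph_eq0.
have a0 := abs_gt0 Habs inz.
have h := congr1 abs (iota_frob c); rewrite (absX Habs) in h.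
have q1 : (0 < q.-1)%N by rewrite -ltnS prednK ?finNzRing_gt1 // (ltnW (finNzRing_gt1 F)).
have h2 : abs (iota c) ^+ q.-1 = 1.
  have anz : abs (iota c) != 0 by rewrite gt_eqF.
  apply: (mulfI anz); rewrite -exprS prednK ?h ?mulr1 //; exact: ltnW (finNzRing_gt1 F).
by apply/eqP; rewrite -(pexpr_eq1 q1) ?h2 // ltW.
Qed.

Lemma abs_iota_le c : abs (iota c) <= 1.
Proof.
have [->|cnz] := eqVneq c 0; first by rewrite rmorph0 (abs0 Habs).
by rewrite abs_iota.
Qed.

Definition ev (p : {poly F}) := (map_poly iota p).[theta].

Lemma evD p1 p2 : ev (p1 + p2) = ev p1 + ev p2. Proof. by rewrite /ev rmorphD hornerD. Qed.
Lemma evM p1 p2 : ev (p1 * p2) = ev p1 * ev p2. Proof. by rewrite /ev rmorphM hornerM. Qed.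
Lemma evC c : ev c%:P = iota c. Proof. by rewrite /ev map_polyC hornerC. Qed.
Lemma evX : ev 'X = theta. Proof. by rewrite /ev map_polyX hornerX. Qed.

Lemma polyabs p : p != 0 -> abs (ev p) = T ^+ (size p).-1.
Proof.
elim/poly_ind: p => [|p c IH] nz; first by rewrite eqxx in nz.
rewrite size_MXaddC evD evM evX evC.
have [p0|pnz] := eqVneq p 0.
  move: nz; rewrite p0 mul0r add0r polyC_eq0 => cnz.
  have -> : ev 0 = 0 by rewrite /ev rmorph0 horner0.
  by rewrite (negbTE cnz) /= mul0r add0r abs_iota // size_poly0 expr0.
rewrite /= (abs_strict Habs) (absM Habs) IH // -exprSr prednK ?size_poly_gt0 //.
apply: le_lt_trans (abs_iota_le c) _.
rewrite -(expr0 T) ltr_eXn2l ?size_poly_gt0 //; exact: T1 HKi.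
Qed.

Lemma ev0 : ev 0 = 0. Proof. by rewrite /ev rmorph0 horner0. Qed.

Lemma residue c : Kinf c -> abs c <= 1 -> exists d, abs (c - iota d) < 1.
Proof.
move=> kc hc; have [p [qq [hq hc2]]] := dens kc ltr01.
rewrite -/(ev qq) in hq; rewrite -/(ev p) -/(ev qq) in hc2.
have qnz : qq != 0 by apply/eqP => h; move: hq; rewrite h ev0 eqxx.
have hT1 := T1 HKi; have hT0 := T0 HKi.
have aQ := polyabs qnz.
have aQ0 : 0 < abs (ev qq) by rewrite aQ exprn_gt0.
have hPQ : abs (ev p / ev qq) <= 1.
  have -> : ev p / ev qq = c - (c - ev p / ev qq) by ring.
  by apply: (absB_le Habs) => //; apply: ltW.
have hsz : (size p - (size qq).-1 <= 1)%N.
  have [->|pnz] := eqVneq p 0; first by rewrite size_poly0.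
  move: hPQ; rewrite (absM Habs) (absV Habs) (polyabs pnz) aQ.
  rewrite ler_pdivrMr ?exprn_gt0 // mul1r ler_eXn2l //.
  have := size_poly_gt0 p; rewrite pnz; lia.
have hD := size1_polyC (leq_trans (eq_leq (size_divp p qnz)) hsz).
set d := (p %/ qq)`_0 in hD.
exists d.
have Ep : ev p = iota d * ev qq + ev (p %% qq) by rewrite {1}(divp_eq p qq) evD evM hD evC.
have -> : c - iota d = (c - ev p / ev qq) + ev (p %% qq) / ev qq.
  rewrite Ep; field; exact: hq.
apply: (absD_lt Habs) => //.
have [->|rnz] := eqVneq (p %% qq) 0; first by rewrite ev0 mul0r (abs0 Habs).
rewrite (absM Habs) (absV Habs) (polyabs rnz) aQ ltr_pdivrMr ?exprn_gt0 // mul1r ltr_eXn2l //.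
have h1 : (size (p %% qq)%R < size qq)%N by rewrite ltn_modp.
have h2 : (0 < size (p %% qq)%R)%N by rewrite size_poly_gt0.
by rewrite -(ltn_add2r 1) !addn1 !prednK // (ltn_trans h2 h1).
Qed.

Lemma abs_root1 (x : L) N : (1 < N)%N -> x ^+ N = x -> x != 0 -> abs x = 1.
Proof.
move=> N1 hx xnz; have a0 := abs_gt0 Habs xnz.
have h := congr1 abs hx; rewrite (absX Habs) in h.
have q1 : (0 < N.-1)%N by rewrite -ltnS prednK // ltnW.
have h2 : abs x ^+ N.-1 = 1.
  have anz : abs x != 0 by rewrite gt_eqF.
  apply: (mulfI anz); rewrite -exprS prednK ?h ?mulr1 //; exact: ltnW.
by apply/eqP; rewrite -(pexpr_eq1 q1) ?h2 // ltW.
Qed.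

Lemma abs_root_le (x : L) N : (1 < N)%N -> x ^+ N = x -> abs x <= 1.
Proof.
move=> N1 hx; have [->|nz] := eqVneq x 0; first by rewrite (abs0 Habs).
by rewrite (abs_root1 N1).
Qed.

Lemma iota_frobn n c : iota c ^+ (q ^ n) = iota c.
Proof. elim: n => [|n IH]; first by rewrite expr1. by rewrite expnSr exprM IH iota_frob. Qed.

Lemma indep_K m (v : 'I_m -> L) Q : (0 < Q)%N -> (forall i, v i ^+ (q ^ Q) = v i) ->
  (forall d : 'I_m -> F, \sum_i iota (d i) * v i = 0 -> forall i, d i = 0) ->
  forall c : 'I_m -> L, (forall i, Kinf (c i)) -> \sum_i c i * v i = 0 -> forall i, c i = 0.
Proof.
move=> Q0 hv hind c kc hs.
have HK := HK HKi.
have N1 : (1 < q ^ Q)%N by apply: qpow_ge2.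
case: (boolP [exists i, c i != 0]) => [/existsP [i0 hi0] | /existsPn H]; last first.
  by move=> i; apply/eqP; move: (H i); rewrite negbK.
exfalso.
case: (@arg_maxP _ R _ i0 xpredT (fun i => abs (c i)) isT) => i1 _ Hmax.
have c1nz : c i1 != 0.
  apply/eqP => h; have := Hmax i0 isT; rewrite /= h (abs0 Habs).
  by move/(le_lt_trans)/(_ (abs_gt0 Habs hi0)); rewrite ltxx.
set c' := fun i => c i / c i1.
have kc' : forall i, Kinf (c' i) by move=> i; apply: (sf_div HK).
have hc' : forall i, abs (c' i) <= 1.
  move=> i; rewrite /c' (absM Habs) (absV Habs) ler_pdivrMr ?mul1r ?abs_gt0 //.
  exact: Hmax.
have hs' : \sum_i c' i * v i = 0.
  by rewrite /c'; under eq_bigr do rewrite mulrAC; rewrite -mulr_suml hs mul0r.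
pose d i := odflt 0 [pick d | abs (c' i - iota d) < 1].
have hd : forall i, abs (c' i - iota (d i)) < 1.
  move=> i; rewrite /d; case: pickP => [x hx //|H0].
  have [x hx] := residue (kc' i) (hc' i); by move: (H0 x); rewrite hx.
have d1 : d i1 = 1.
  have := hd i1; rewrite /c' mulfV //.
  apply: contraTeq => dn1; rewrite -(rmorph1 iota) -rmorphB abs_iota ?ltxx //.
  by rewrite subr_eq0 eq_sym.
set w := \sum_i iota (d i) * v i.
have ew : w = \sum_i (iota (d i) - c' i) * v i.
  by rewrite /w; under [RHS]eq_bigr do rewrite mulrBl; rewrite sumrB hs' subr0.
have aw : abs w < 1.
  rewrite ew; elim/big_ind: _ => //; first by rewrite (abs0 Habs).
    by move=> x y; apply: (absD_lt Habs).
  move=> i _; rewrite (absM Habs) (absB Habs).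
  have := hd i; have := abs_root_le N1 (hv i); have := abs_ge0 Habs (v i).
  have := abs_ge0 Habs (c' i - iota (d i)); nra.
have fw : w ^+ (q ^ Q) = w.
  rewrite /w; elim/big_rec: _ => [|i y _ IH]; first by rewrite expr0n /= eqn0Ngt expn_gt0 (q0 F).
  by rewrite (frobD (frobL iota)) IH exprMn iota_frobn hv.
have w0 : w = 0.
  apply/eqP; apply: contraTT aw => wnz; by rewrite (abs_root1 N1) // ltxx.
have := hind d w0 i1; rewrite d1 => /eqP; by rewrite oner_eq0.
Qed.

End Res.


Lemma qF0 (F : finFieldType) : (#|F|%:R : F) = 0.
Proof.
have [p _ pF] := finPcharP F.
have e : #|F| = (p ^ logn p #|F|)%N := card_pprimeChar pF.
have k0 : logn p #|F| != 0%N.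
  apply: contraTneq (finNzRing_gt1 F) => k0; by rewrite e k0.
by rewrite e natrX (pcharf0 pF) expr0n (negbTE k0).
Qed.

Section Count.
Variables (F : finFieldType) (L : closedFieldType) (iota : {rmorphism F -> L}).
Local Notation q := #|F|.

Lemma qL0 n : (0 < n)%N -> ((q ^ n)%N%:R : L) = 0.
Proof. by move=> n0; rewrite natrX -(rmorph_nat iota) qF0 rmorph0 expr0n eqn0Ngt n0. Qed.

Lemma roots_exist n : (0 < n)%N -> exists rs : seq L,
  [/\ uniq rs, size rs = (q ^ n)%N & forall z, z \in rs -> z ^+ (q ^ n) = z].
Proof.
move=> n0; set Q := (q ^ n)%N.
have Q2 : (2 <= Q)%N by apply: qpow_ge2.
set p : {poly L} := 'X^Q - 'X.
have szp : size p = Q.+1 by rewrite /p size_polyDl ?size_polyXn // size_polyN size_polyX ltnS.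
have lp : lead_coef p = 1.
  by rewrite /p lead_coefDl ?lead_coefXn // size_polyXn size_polyN size_polyX ltnS.
have [rs hrs] := closed_field_poly_normal p.
rewrite lp scale1r in hrs.
exists rs; split.
- rewrite -separable_prod_XsubC -hrs unlock /separable_poly /p derivB derivXn derivX.
  rewrite -mulr_natr.
  have -> : (Q%:R : {poly L}) = 0 by rewrite -polyC_natr qL0 // polyC0.
  rewrite mulr0 sub0r.
  have -> : (-1 : {poly L}) = (-1 : L) *: 1 by rewrite scaleN1r.
  by rewrite coprimepZr ?oppr_eq0 ?oner_eq0 // coprimep1.
- by have := size_prod_XsubC rs (fun x => x); rewrite -hrs szp => -[].
- move=> z hz; have : root p z by rewrite hrs root_prod_XsubC.
  by rewrite /p rootE !hornerE subr_eq0 => /eqP.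
Qed.
End Count.

Definition indepF (F : finFieldType) (L : fieldType) (iota : {rmorphism F -> L}) m (v : 'I_m -> L) :=
  forall d : 'I_m -> F, \sum_i iota (d i) * v i = 0 -> forall i, d i = 0.

Lemma build (F : finFieldType) (L : closedFieldType) (iota : {rmorphism F -> L}) r :
  (0 < r)%N -> forall m, (m <= r)%N ->
  exists v : 'I_m -> L, (forall i, v i ^+ (#|F| ^ r) = v i) /\ indepF iota v.
Proof.
move=> r0; have [rs [urs srs hrs]] := roots_exist iota r0.
elim=> [|m IH] hm.
  by exists (fun _ => 0); split => [[]|d _ []].
have [v [hv iv]] := IH (ltnW hm).
set span := [seq \sum_i iota (f i) * v i | f : {ffun 'I_m -> F} <- enum {ffun 'I_m -> F}].
have : has (fun w => w \notin span) rs.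
  apply: contraT => /hasPn H.
  have sub : {subset rs <= span} by move=> x /H; rewrite negbK.
  have := uniq_leq_size urs sub; rewrite srs /span size_map -cardE card_ffun card_ord.
  by rewrite leqNgt ltn_exp2l ?hm // finNzRing_gt1.
case/hasP => w wrs wsp.
pose v' (i : 'I_m.+1) := if unlift ord_max i is Some j then v j else w.
have v'w : forall j : 'I_m, v' (widen_ord (leqnSn m) j) = v j.
  move=> j; have e : widen_ord (leqnSn m) j = lift ord_max j by apply: val_inj; exact: (esym (lift_max j)).
  by rewrite /v' e liftK.
have v'm : v' ord_max = w by rewrite /v' unlift_none.
exists v'; split.
  by move=> i; rewrite /v'; case: unliftP => [j _|_]; [exact: hv | exact: hrs].
move=> d hd.
rewrite big_ord_recr /= v'm in hd.
have e2 : \sum_(i < m) iota (d (widen_ord (leqnSn m) i)) * v' (widen_ord (leqnSn m) i) =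
  \sum_(i < m) iota (d (widen_ord (leqnSn m) i)) * v i by apply: eq_bigr => i _; rewrite v'w.
rewrite e2 in hd.
have dm : d ord_max = 0.
  apply/eqP; apply: contraNT wsp => dnz.
  apply/mapP; exists [ffun i => - d (widen_ord (leqnSn m) i) / d ord_max]; first by rewrite mem_enum.
  have inz : iota (d ord_max) != 0 by rewrite fmorph_eq0.
  apply: (mulfI inz); rewrite mulr_sumr.
  have : iota (d ord_max) * w = - \sum_i iota (d (widen_ord (leqnSn m) i)) * v i.
    by apply/eqP; rewrite -addr_eq0 addrC hd.
  move=> ->; rewrite -sumrN; apply: eq_bigr => i _.
  rewrite ffunE rmorphM rmorphN fmorphV.
  by move: (iota (d ord_max)) inz (iota _) (v i) => a anz b c; field.
rewrite dm rmorph0 mul0r addr0 in hd.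
have := iv _ hd => H i.
case: (unliftP ord_max i) => [j ->|->] //.
have e : lift ord_max j = widen_ord (leqnSn m) j by apply: val_inj; exact: (lift_max j).
by rewrite e; apply: H.
Qed.


Lemma phi_apply_eq (L : fieldType) q theta r (x : L) : (1 <= r)%N ->
  phi_apply q (phi_coef theta r) r x = theta * x - theta * x ^+ (q ^ r).
Proof.
case: r => [//|r'] _.
rewrite /phi_apply big_ord_recl /= big_ord_recr /= expn0 expr1 {1}/phi_coef /=.
rewrite big1 ?add0r; last first.
  by move=> i _; rewrite /phi_coef /= eqn_leq ltnNge ltn_ord andbF mul0r.
by rewrite /phi_coef /= eqxx mulNr.
Qed.

Section Final.
Variables (R : realType) (F : finFieldType) (L : closedFieldType) (iota : {rmorphism F -> L})
  (abs : L -> R) (theta : L) (Kinf : L -> Prop).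
Hypothesis Habs : nonarch_abs abs.
Hypothesis HKi : is_Kinfty iota abs theta Kinf.

Lemma Kiota c : Kinf (iota c). Proof. by case: HKi => -[_ _ H _ _] _. Qed.

Lemma partA r : (1 <= r)%N -> forall alpha : nat -> L,
  is_exp_coeffs #|F| theta (phi_coef theta r) r alpha ->
  [/\ (forall x : L, phi_apply #|F| (phi_coef theta r) r x = 0 <-> x ^+ (#|F| ^ r)%N = x),
      (forall x : L, x ^+ (#|F| ^ r)%N = x -> Kinf_lattice #|F| abs alpha Kinf x) &
      deg_ge Kinf (Kinf_lattice #|F| abs alpha Kinf) r].
Proof.
move=> r1 alpha Hal; split.
- move=> x; rewrite phi_apply_eq // -mulrBr; split => [/eqP|->]; last by rewrite subrr mulr0.
  by rewrite mulf_eq0 (negbTE (th0 Habs HKi)) /= subr_eq0 => /eqP h; apply: esym.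
- by move=> x hx; apply: (in_lattice_field Habs HKi r1 Hal).
- have [v [hv iv]] := build iota r1 (leqnn r).
  exists v; split; first by move=> i; apply: (in_lattice_field Habs HKi r1 Hal).
  by move=> c kc hs; apply: (indep_K Habs HKi r1 hv iv).
Qed.

End Final.


End Aux.

Theorem mainTheorem5 (R : realType) (F : finFieldType) (L : closedFieldType)
  (iota : {rmorphism F -> L}) (abs : L -> R) (theta : L) (Kinf : L -> Prop) :
  nonarch_abs abs -> is_Kinfty iota abs theta Kinf -> algebraic_over Kinf ->
  (forall r : nat, (1 <= r)%N -> forall alpha : nat -> L,
     is_exp_coeffs #|F| theta (phi_coef theta r) r alpha ->
     [/\ (forall x : L, phi_apply #|F| (phi_coef theta r) r x = 0 <->
                        x ^+ (#|F| ^ r)%N = x),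
         (forall x : L, x ^+ (#|F| ^ r)%N = x ->
                        Kinf_lattice #|F| abs alpha Kinf x) &
         deg_ge Kinf (Kinf_lattice #|F| abs alpha Kinf) r])
  /\ (forall B : nat, exists r : nat, (1 <= r)%N /\
        forall alpha : nat -> L, is_exp_coeffs #|F| theta (phi_coef theta r) r alpha ->
        deg_ge Kinf (Kinf_lattice #|F| abs alpha Kinf) B.+1)
  /\ (forall B : nat, exists r : nat, (1 <= r)%N /\
        forall alpha : nat -> L, is_exp_coeffs #|F| theta (phi_coef theta r) r alpha ->
        deg_ge (in_Fq iota)
          (fun x => alg_over_Fq iota x /\ Kinf_lattice #|F| abs alpha Kinf x) B.+1).
Proof.
Import Aux.
move=> Habs HKi _.
split; first exact: (partA Habs HKi).
split.
  move=> B; exists B.+1; split; first by []. move=> alpha Hal.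
  by have [] := partA Habs HKi (ltn0Sn B) Hal.
move=> B; exists B.+1; split; first by []. move=> alpha Hal.
have r1 : (1 <= B.+1)%N by [].
have [v [hv iv]] := build iota r1 (leqnn _).
exists v; split.
  move=> i; split; last exact: (in_lattice_field Habs HKi r1 Hal).
  exists ('X^(#|F| ^ B.+1) - 'X); split.
    apply/eqP => h; have := congr1 (fun p : {poly F} => size p) h.
    rewrite size_poly0 size_polyDl ?size_polyXn // size_polyN size_polyX ltnS.
    exact: (qpow_ge2 F).
  by rewrite rootE rmorphB /= map_polyXn map_polyX !hornerE hv subrr.
move=> c kc hs.
have kc' : forall i, Kinf (c i) by move=> i; have [d ->] := kc i; apply: (Kiota HKi).
exact: (indep_K Habs HKi r1 hv iv kc' hs).
Qed.
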